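(* Let $M$ be a magma satisfying $(xy)z = xz$ and $x(yz) = xz$ for all $x,y,z\in M$. Then $M$ satisfies $xy = xz$ and $(xy)z = xy$ for all $x,y,z\in M$ if and only if $M$ avoids the $2$-element right zero band $2_{RZ}$ on $\{0,1\}$ with Cayley table \[ \begin{array}{c|cc} 2_{RZ} & 0 & 1 \\ \hline 0 & 0 & 1 \\ 1 & 0 & 1 \end{array}. \]
   Context: A magma is a nonempty set with a binary operation, written by juxtaposition. A magma $M$ avoids a magma $F$ if no submagma of $M$ is isomorphic to $F$. *)

(* Defs.v *)
(* A magma is a type T (nonempty) with op : T -> T -> T. *)

(* The 2-element right zero band 2_RZ on {0,1} (0 = false, 1 = true): x y = y. *)
Definition rz2_op (a b : bool) : bool := b.

Definition submagma {T : Type} (op : T -> T -> T) (S : T -> Prop) : Prop :=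
  (exists x, S x) /\ (forall x y, S x -> S y -> S (op x y)).

Definition iso_to_RZ2 {T : Type} (op : T -> T -> T) (S : T -> Prop) : Prop :=
  exists f : bool -> T,
    (forall b, S (f b)) /\
    (forall x, S x -> exists! b, f b = x) /\
    (forall a b, f (rz2_op a b) = op (f a) (f b)).

Definition avoids_RZ2 {T : Type} (op : T -> T -> T) : Prop :=
  ~ (exists S : T -> Prop, submagma op S /\ iso_to_RZ2 op S).

(* Main.v *)
Require Import Defs.
From Stdlib Require Import Classical.

Theorem mainTheorem17 (T : Type) (op : T -> T -> T) (t0 : T)
  (H1 : forall x y z, op (op x y) z = op x z)
  (H2 : forall x y z, op x (op y z) = op x z) :
  ((forall x y z, op x y = op x z) /\ (forall x y z, op (op x y) z = op x y))
  <-> avoids_RZ2 op.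
Proof.
  assert (K : forall x w w', op (op x w) (op x w') = op x w').
  { intros. rewrite H1, H2. reflexivity. }
  split.
  - intros [A B] [S [_ [f [Sf [U Hf]]]]].
    assert (E0 : f true = op (f false) (f true)) by exact (Hf false true).
    assert (E1 : f false = op (f false) (f false)) by exact (Hf false false).
    rewrite (A (f false) (f true) (f false)) in E0.
    rewrite <- E1 in E0.
    destruct (U (f false) (Sf false)) as [c [_ Hc]].
    pose proof (Hc true E0). pose proof (Hc false eq_refl). congruence.
  - intros Av.
    assert (A : forall x y z, op x y = op x z).
    { intros x y z. destruct (classic (op x y = op x z)) as [h|h]; [exact h|].
      exfalso. apply Av.
      set (a := op x y). set (b := op x z).
      exists (fun t => t = a \/ t = b). split.
      + split. exists a; auto.
        intros u v [-> | ->] [-> | ->]; unfold a, b; rewrite K; auto.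
      + exists (fun c : bool => if c then b else a). split; [|split].
        * intros [|]; auto.
        * intros t [-> | ->].
          -- exists false. split; auto. intros [|] e; auto; exfalso; apply h; symmetry; exact e.
          -- exists true. split; auto. intros [|] e; auto; exfalso; apply h; exact e.
        * intros [|] [|]; unfold rz2_op, a, b; rewrite K; reflexivity. }
    split; auto.
    intros x y z. rewrite H1. apply A.
Qed.
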